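(* The set of bounded elements of $\mathcal{P}_{\mathrm{fci}}(I)$ is a definable subset of the structure $\mathcal{L}(I)$.
   Context: Let $I$ be a dense linear order with left endpoint $0$ and no right endpoint. Let $\mathcal{P}_{\mathrm{fci}}(I)$ be the set of finite unions of closed intervals $[i,j]$, $[i,+\infty)$, $(-\infty,j]$ of $I$. $\mathcal{L}(I)$ is the structure with universe $\mathcal{P}_{\mathrm{fci}}(I)$ in the signature $\{\cup,\cap,\bot,c_0,\min,\max,l,r\}$, interpreted as follows. - $\cup$ and $\cap$ are union and intersection. - $\bot$ is $\emptyset$, and $c_0$ is $\{0\}$. - $\min(A)$ is the singleton of the least element of $A$, with $\min(\emptyset)=\emptyset$. - $\max(A)$ is the singleton of the greatest element when $A$ is nonempty and bounded, and $\emptyset$ otherwise. - $l(A)$ and $r(A)$ are the sets of left and right endpoints of $A$. Left endpoints are the minima of the maximal closed intervals composing $A$. Right endpoints are the maxima of the bounded ones. *)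

(* Defs.v *)
From Stdlib Require Import List.
Import ListNotations.

Record dlo_left_endpoint (T : Type) (lt : T -> T -> Prop) (z : T) : Prop := {
  dlo_irrefl : forall x, ~ lt x x;
  dlo_trans : forall x y w, lt x y -> lt y w -> lt x w;
  dlo_total : forall x y, lt x y \/ x = y \/ lt y x;
  dlo_dense : forall x y, lt x y -> exists w, lt x w /\ lt w y;
  dlo_left : forall x, ~ lt x z;
  dlo_no_right : forall x, exists y, lt x y
}.

Arguments dlo_left_endpoint {T}.

Section Sets.
Variables (T : Type) (lt : T -> T -> Prop) (z : T).

Definition le (x y : T) : Prop := lt x y \/ x = y.

Definition set := T -> Prop.

Inductive cinterval : Type :=
| ICC : T -> T -> cinterval
| IGe : T -> cinterval
| ILe : T -> cinterval.

Definition cint_mem (c : cinterval) : set :=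
  match c with
  | ICC i j => fun x => le i x /\ le x j
  | IGe i => fun x => le i x
  | ILe j => fun x => le x j
  end.

Definition is_fci (A : set) : Prop :=
  exists cs : list cinterval,
    forall x, A x <-> exists c, In c cs /\ cint_mem c x.

Definition is_cint (C : set) : Prop :=
  exists c, forall x, C x <-> cint_mem c x.

Definition subset (A B : set) : Prop := forall x, A x -> B x.

Definition s_cup (A B : set) : set := fun x => A x \/ B x.
Definition s_cap (A B : set) : set := fun x => A x /\ B x.
Definition s_bot : set := fun _ => False.
Definition s_c0 : set := fun x => x = z.
Definition s_min (A : set) : set := fun x => A x /\ forall y, A y -> le x y.
(** singleton of the greatest element, empty if there is none
    (for A in P_fci(I): iff A is empty or unbounded) *)
Definition s_max (A : set) : set := fun x => A x /\ forall y, A y -> le y x.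

Definition maximal_cint (A C : set) : Prop :=
  is_cint C /\ subset C A /\
  forall D, is_cint D -> subset C D -> subset D A -> subset D C.

Definition s_l (A : set) : set :=
  fun x => exists C, maximal_cint A C /\ s_min C x.
Definition s_r (A : set) : set :=
  fun x => exists C, maximal_cint A C /\ s_max C x.

Definition bounded (A : set) : Prop := exists b, forall x, A x -> le x b.

End Sets.
Arguments s_cup {T}.
Arguments s_cap {T}.
Arguments s_c0 {T}.
Arguments s_min {T}.
Arguments s_max {T}.
Arguments s_l {T}.
Arguments s_r {T}.
Arguments is_fci {T}.
Arguments bounded {T}.

Inductive term : Type :=
| TVar : nat -> term
| TCup : term -> term -> term
| TCap : term -> term -> term
| TBot : term
| TC0 : term
| TMin : term -> term
| TMax : term -> term
| TL : term -> term
| TR : term -> term.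

Inductive formula : Type :=
| FEq : term -> term -> formula
| FFalse : formula
| FNot : formula -> formula
| FAnd : formula -> formula -> formula
| FOr : formula -> formula -> formula
| FImp : formula -> formula -> formula
| FEx : nat -> formula -> formula
| FAll : nat -> formula -> formula.

Section Semantics.
Variables (T : Type) (lt : T -> T -> Prop) (z : T).

Fixpoint eval_term (env : nat -> set T) (t : term) : set T :=
  match t with
  | TVar n => env n
  | TCup a b => s_cup (eval_term env a) (eval_term env b)
  | TCap a b => s_cap (eval_term env a) (eval_term env b)
  | TBot => s_bot T
  | TC0 => s_c0 z
  | TMin a => s_min lt (eval_term env a)
  | TMax a => s_max lt (eval_term env a)
  | TL a => s_l lt (eval_term env a)
  | TR a => s_r lt (eval_term env a)
  end.

Definition update (env : nat -> set T) (n : nat) (A : set T) : nat -> set T :=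
  fun m => if Nat.eqb m n then A else env m.

(** Satisfaction in L(I): quantifiers range over P_fci(I);
    equality is (extensional) equality of subsets of I. *)
Fixpoint sat (env : nat -> set T) (phi : formula) : Prop :=
  match phi with
  | FEq a b => forall x, eval_term env a x <-> eval_term env b x
  | FFalse => False
  | FNot p => ~ sat env p
  | FAnd p q => sat env p /\ sat env q
  | FOr p q => sat env p \/ sat env q
  | FImp p q => sat env p -> sat env q
  | FEx n p => exists A, is_fci lt A /\ sat (update env n A) p
  | FAll n p => forall A, is_fci lt A -> sat (update env n A) p
  end.

(** X (a predicate on P_fci(I)) is definable (without parameters) in L(I):
    some formula phi, read with free variable 0, defines X in every
    assignment of elements of P_fci(I) to the variables. *)
Definition definable (X : set T -> Prop) : Prop :=
  exists phi : formula,
    forall env : nat -> set T, (forall n, is_fci lt (env n)) ->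
      (sat env phi <-> X (env 0)).

End Semantics.
Arguments definable {T}.

(* Main.v *)
Require Import Defs.
From Stdlib Require Import List Classical.
Import ListNotations.

Section Aux.
Variables (T : Type) (lt : T -> T -> Prop) (z : T).
Hypothesis HI : dlo_left_endpoint lt z.

Lemma le_trans' x y w : le T lt x y -> le T lt y w -> le T lt x w.
Proof.
  intros [H1|H1] [H2|H2]; subst; unfold le; auto.
  left; eapply (dlo_trans _ _ _ HI); eauto.
Qed.

Definition P (S : set T) := (forall x, ~ S x) \/ exists m, S m /\ forall y, S y -> le T lt y m.

Lemma P_union (S1 S2 : set T) : P S1 -> P S2 -> P (fun x => S1 x \/ S2 x).
Proof.
  intros [E1|[m1 [M1 H1]]] [E2|[m2 [M2 H2]]].
  - left; intros x [h|h]; [eapply E1|eapply E2]; eauto.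
  - right; exists m2; split; auto. intros y [h|h]; [destruct (E1 _ h)|auto].
  - right; exists m1; split; auto. intros y [h|h]; [auto|destruct (E2 _ h)].
  - destruct (dlo_total _ _ _ HI m1 m2) as [L|[L|L]].
    + right; exists m2; split; auto. intros y [h|h]; auto.
      eapply le_trans'; [apply H1; auto| left; auto].
    + subst; right; exists m2; split; auto. intros y [h|h]; auto.
    + right; exists m1; split; auto. intros y [h|h]; auto.
      eapply le_trans'; [apply H2; auto| left; auto].
Qed.

Lemma P_list (cs : list (cinterval T)) :
  (exists b, forall x, (exists c, In c cs /\ cint_mem T lt c x) -> le T lt x b) ->
  P (fun x => exists c, In c cs /\ cint_mem T lt c x).
Proof.
  induction cs as [|c cs IH]; intros [b Hb].
  - left; intros x [c [[] _]].
  - assert (Q : P (fun x => cint_mem T lt c x \/ exists c', In c' cs /\ cint_mem T lt c' x)).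
    { apply P_union.
      - destruct c as [i j|i|j]; simpl.
        + destruct (dlo_total _ _ _ HI i j) as [L|[L|L]].
          * right; exists j; split; [split; [left|right]; auto|]. intros y [_ h]; auto.
          * subst; right; exists j; split; [split; right; auto|]. intros y [_ h]; auto.
          * left; intros x [h1 h2]. pose proof (le_trans' _ _ _ h1 h2) as [h|h].
            -- apply (dlo_irrefl _ _ _ HI i); eapply (dlo_trans _ _ _ HI); eauto.
            -- rewrite h in L; apply (dlo_irrefl _ _ _ HI j); auto.
        + exfalso.
          destruct (dlo_total _ _ _ HI i b) as [L|[L|L]].
          * destruct (dlo_no_right _ _ _ HI b) as [y Hy].
            assert (le T lt y b) as [h|h].
            { apply Hb; exists (IGe T i); split; [left; auto|]. simpl; left.
              eapply (dlo_trans _ _ _ HI); eauto. }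
            -- apply (dlo_irrefl _ _ _ HI y); eapply (dlo_trans _ _ _ HI); eauto.
            -- rewrite h in Hy; apply (dlo_irrefl _ _ _ HI b); auto.
          * subst. destruct (dlo_no_right _ _ _ HI b) as [y Hy].
            assert (le T lt y b) as [h|h].
            { apply Hb; exists (IGe T b); split; [left; auto|]. simpl; left; auto. }
            -- apply (dlo_irrefl _ _ _ HI y); eapply (dlo_trans _ _ _ HI); eauto.
            -- rewrite h in Hy; apply (dlo_irrefl _ _ _ HI b); auto.
          * assert (le T lt i b) as [h|h].
            { apply Hb; exists (IGe T i); split; [left; auto|]. simpl; right; auto. }
            -- apply (dlo_irrefl _ _ _ HI i); eapply (dlo_trans _ _ _ HI); eauto.
            -- rewrite h in L; apply (dlo_irrefl _ _ _ HI b); auto.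
        + right; exists j; split; [right; auto|]. auto.
      - apply IH. exists b; intros x [c' [Hc Hm]]. apply Hb; exists c'; split; simpl; auto. }
    destruct Q as [E|[m [M H]]].
    + left; intros x [c' [[e|e] h]]; subst; eapply E; eauto.
    + right; exists m; split.
      * destruct M as [M|[c' [Hc Hm]]]; [exists c; simpl; auto| exists c'; simpl; auto].
      * intros y [c' [[e|e] h]]; subst; apply H; eauto.
Qed.
End Aux.

Theorem lemma4p3 (T : Type) (lt : T -> T -> Prop) (z : T)
  (HI : dlo_left_endpoint lt z) :
  definable lt z (bounded lt).
Proof.
  exists (FOr (FEq (TVar 0) TBot) (FNot (FEq (TMax (TVar 0)) TBot))).
  intros env Henv; simpl. split.
  - intros [E|N].
    + exists z; intros x h; destruct (proj1 (E x) h).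
    + apply NNPP; intro NB. apply N; intro x; split; [|intros []].
      intros [Ax Hx]. apply NB; exists x; auto.
  - intros [b Hb]. destruct (Henv 0) as [cs Hcs].
    assert (Q : P T lt (fun x => exists c, In c cs /\ cint_mem T lt c x)).
    { eapply P_list; [exact HI|]. exists b; intros x h; apply Hb, Hcs; auto. }
    destruct Q as [E|[m [M H]]].
    + left; intro x; split; [|intros []]. intro h; apply (E x), Hcs; auto.
    + right; intro N. apply (proj1 (N m)). split; [apply Hcs; auto|].
      intros y h; apply H, Hcs; auto.
Qed.
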